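(* Let $G$ be a directed graph with vertices $s,t$ and let $k\ge1$. For every $C\in U^k$ there exists $\hat C\in U^k_{\mathrm{lr}}$ such that $\mu_e(C)=\mu_e(\hat C)$ for all $e\in E(G)$.
   Context: An $s$-$t$ cut of a directed graph $G$ is a set $X\subseteq E(G)$ such that removing $X$ leaves no directed $s$-$t$ path; $\Gamma_G(s,t)$ is the set of $s$-$t$ cuts of minimum cardinality. For $s$-$t$ cuts $X,Y$, write $X\le Y$ if every directed $s$-$t$ path in $G$ meets an edge of $X$ at or before (along the path) an edge of $Y$. $U^k$ denotes the set of $k$-tuples $[X_1,\dots,X_k]$ with each $X_i\in\Gamma_G(s,t)$, and $U^k_{\mathrm{lr}}\subseteq U^k$ the set of those in left-right order, i.e. with $X_i\le X_j$ for all $i<j$. For $C=[X_1,\dots,X_k]$ and $e\in E(G)$, the multiplicity $\mu_e(C)$ is the number of indices $i$ with $e\in X_i$. *)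

(* Defs.v *)
From mathcomp Require Import all_boot.
Set Implicit Arguments. Unset Strict Implicit. Unset Printing Implicit Defensive.

Section Cuts.
Variables (V E : finType) (src dst : E -> V).

Definition walk_vertices (s : V) (p : seq E) : seq V := s :: map dst p.

Fixpoint chain (u : V) (p : seq E) : bool :=
  if p is e :: p' then (src e == u) && chain (dst e) p' else true.

Definition is_st_path (s t : V) (p : seq E) : bool :=
  [&& chain s p, last s (map dst p) == t & uniq (walk_vertices s p)].

Definition is_st_cut (s t : V) (X : {set E}) : Prop :=
  forall p, is_st_path s t p -> has (fun e => e \in X) p.

Definition is_min_st_cut (s t : V) (X : {set E}) : Prop :=
  is_st_cut s t X /\ forall Y : {set E}, is_st_cut s t Y -> #|X| <= #|Y|.

Definition cut_le (s t : V) (X Y : {set E}) : Prop :=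
  forall p, is_st_path s t p ->
    has (fun e => e \in X) p /\
    find (fun e => e \in X) p <= find (fun e => e \in Y) p.

Definition in_Uk (s t : V) (k : nat) (C : 'I_k -> {set E}) : Prop :=
  forall i, is_min_st_cut s t (C i).

Definition in_Uk_lr (s t : V) (k : nat) (C : 'I_k -> {set E}) : Prop :=
  in_Uk s t C /\ forall i j : 'I_k, i < j -> cut_le s t (C i) (C j).

Definition mult (k : nat) (C : 'I_k -> {set E}) (e : E) : nat :=
  #|[set i : 'I_k | e \in C i]|.

End Cuts.

(* Main.v *)
Require Import Defs.
From mathcomp Require Import all_boot.
From mathcomp Require Import zify.
Set Implicit Arguments. Unset Strict Implicit. Unset Printing Implicit Defensive.

Section Aux.
Variables (V E : finType) (src dst : E -> V) (s t : V).

Definition dplus (B : {set V}) : {set E} :=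
  [set e | (src e \in B) && (dst e \notin B)].

Lemma chain_exit (B : {set V}) u p : u \in B -> chain src dst u p ->
  last u (map dst p) \notin B -> has (fun e => e \in dplus B) p.
Proof.
elim: p u => [|e p IH] u /=; first by move=> ->.
move=> uB /andP[/eqP se ch] hl.
case: (boolP (dst e \in B)) => hd.
  by rewrite (IH (dst e)) // orbT.
by rewrite inE se uB hd.
Qed.

Lemma dplus_cut (B : {set V}) : s \in B -> t \notin B -> is_st_cut src dst s t (dplus B).
Proof.
move=> sB tB p /and3P[ch /eqP hl _]; have := chain_exit sB ch; rewrite hl; exact.
Qed.

Lemma find_mono (A B : {set V}) u p : A \subset B -> u \in A ->
  chain src dst u p ->
  find (fun e => e \in dplus A) p <= find (fun e => e \in dplus B) p.
Proof.
elim: p u => [|e p IH] u //= AB uA /andP[/eqP se ch].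
rewrite !inE se uA /=.
case: (boolP (dst e \in A)) => hA /=; last by [].
have hB : dst e \in B := subsetP AB _ hA.
rewrite hB andbF; exact: (IH (dst e) AB hA ch).
Qed.

Definition redge (X : {set E}) : rel V :=
  fun u v => [exists e, [&& e \notin X, src e == u & dst e == v]].

Definition reach X : {set V} := [set v | connect (redge X) s v].

Lemma reach_s X : s \in reach X.
Proof. by rewrite inE connect0. Qed.

Lemma dplus_reach_sub X : dplus (reach X) \subset X.
Proof.
apply/subsetP => e; rewrite !inE => /andP[hu hv]; apply/negPn/negP => heX.
move/negP: hv; apply; apply: connect_trans hu _; apply: connect1.
by apply/existsP; exists e; rewrite heX !eqxx.
Qed.

Lemma lift_path X u vp : path (redge X) u vp ->
  exists p : seq E, [/\ chain src dst u p, map dst p = vp &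
                        all (fun e => e \notin X) p].
Proof.
elim: vp u => [|v vp IH] u /=; first by exists [::].
move=> /andP[/existsP[e /and3P[eX /eqP se /eqP de]] hp].
have [p [h1 h2 h3]] := IH v hp.
by exists (e :: p); rewrite /= se de eqxx h1 h2 eX h3.
Qed.

Lemma reach_t X : is_st_cut src dst s t X -> t \notin reach X.
Proof.
move=> hc; rewrite inE; apply/negP => /connectP[vp hp ht].
case/shortenP: hp ht => vp' hp' hu _ ht.
have [p [h1 h2 h3]] := lift_path hp'.
have : is_st_path src dst s t p.
  by rewrite /is_st_path /walk_vertices h1 h2 ht eqxx hu.
move=> /hc /hasP[e ep eX]; move/allP: h3 => /(_ e ep); by rewrite eX.
Qed.

End Aux.

Lemma sum_eq_le (I : finType) (f g : I -> nat) :
  (forall i, f i <= g i) -> \sum_i g i <= \sum_i f i -> forall i, f i = g i.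
Proof.
move=> le hs i; apply/eqP; rewrite eqn_leq le /=.
move: hs; rewrite (bigD1 i) //= [X in _ <= X](bigD1 i) //=.
have : \sum_(j | j != i) f j <= \sum_(j | j != i) g j by apply: leq_sum.
lia.
Qed.

Lemma count_thr k a b :
  #|[set j : 'I_k | (k - j <= b) && ~~ (k - j <= a)]| <= b - a.
Proof.
rewrite cardE.
have : size (map (fun j : 'I_k => k - j) (enum [set j : 'I_k | (k - j <= b) && ~~ (k - j <= a)]))
   <= size (iota a.+1 (b - a)).
  apply: uniq_leq_size.
    rewrite map_inj_in_uniq ?enum_uniq //.
    move=> x y _ _ /= h; apply/val_inj => /=.
    have := ltn_ord x; have := ltn_ord y; lia.
  move=> n /mapP[j]; rewrite mem_enum inE => /andP[h1 h2] ->.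
  rewrite mem_iota; lia.
by rewrite size_map size_iota.
Qed.

Lemma card_setP (T : finType) (P : pred T) : #|[set x | P x]| = \sum_x (P x : nat).
Proof.
rewrite -sum1_card big_mkcond /=; apply: eq_bigr => x _; rewrite inE; by case: (P x).
Qed.

Lemma sum_mult (E : finType) k (F : 'I_k -> {set E}) :
  \sum_e mult F e = \sum_i #|F i|.
Proof.
rewrite /mult; under eq_bigr do rewrite card_setP.
rewrite exchange_big /=; apply: eq_bigr => i _.
rewrite -sum1_card [RHS]big_mkcond /=; apply: eq_bigr => e _; by case: (e \in F i).
Qed.

Theorem proposition1 (V E : finType) (src dst : E -> V) (s t : V) (k : nat)
  (hk : 0 < k) (C : 'I_k -> {set E}) :
  in_Uk src dst s t C ->
  exists Chat : 'I_k -> {set E},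
    in_Uk_lr src dst s t Chat /\ forall e : E, mult C e = mult Chat e.
Proof.
move=> hC.
pose A i := reach src dst s (C i).
pose c v := #|[set i | v \in A i]|.
pose B (j : 'I_k) := [set v | k - j <= c v].
pose Chat j := dplus src dst (B j).
pose lam := #|C (Ordinal hk)|.
have hCl : forall i, #|C i| = lam.
  move=> i; apply/eqP; rewrite eqn_leq.
  by rewrite (proj2 (hC i) _ (proj1 (hC _))) (proj2 (hC _) _ (proj1 (hC i))).
have cs : c s = k.
  rewrite /c (_ : [set i | s \in A i] = setT) ?cardsT ?card_ord //.
  by apply/setP => i; rewrite in_setT in_set; exact: reach_s.
have ct : c t = 0.
  rewrite /c (_ : [set i | t \in A i] = set0) ?cards0 //.
  by apply/setP => i; rewrite in_set0 in_set; exact: negbTE (reach_t (proj1 (hC i))).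
have sB : forall j, s \in B j by move=> j; rewrite inE cs leq_subr.
have tB : forall j, t \notin B j.
  move=> j; rewrite inE ct -ltnNge subn_gt0; exact: ltn_ord.
have cutB : forall j, is_st_cut src dst s t (Chat j).
  move=> j; exact: dplus_cut.
have geB : forall j, lam <= #|Chat j|.
  move=> j; exact: (proj2 (hC (Ordinal hk)) _ (cutB j)).
have multle : forall e, mult Chat e <= mult C e.
  move=> e; set u := src e; set v := dst e.
  have h1 : mult Chat e <= c u - c v.
    rewrite /mult.
    rewrite (_ : [set i | e \in Chat i] =
       [set j : 'I_k | (k - j <= c u) && ~~ (k - j <= c v)]);
      first exact: count_thr.
    by apply/setP => j; rewrite !inE.
  have h2 : c u <= #|[set i | (u \in A i) && (v \notin A i)]| + c v.
    apply: leq_trans (_ : #|[set i | (u \in A i) && (v \notin A i)] :|: [set i | v \in A i]| <= _).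
      apply: subset_leq_card; apply/subsetP => i; rewrite in_setU !in_set.
      by case: (connect _ s u); case: (connect _ s v).
    by rewrite cardsU leq_subr.
  have h3 : #|[set i | (u \in A i) && (v \notin A i)]| <= mult C e.
    apply: subset_leq_card; apply/subsetP => i; rewrite !inE => hi.
    apply: (subsetP (dplus_reach_sub src dst s (C i))).
    by rewrite inE !in_set.
  lia.
have multeq : forall e, mult C e = mult Chat e.
  move=> e; symmetry; apply: (sum_eq_le multle) e.
  rewrite !sum_mult; apply: leq_sum => i _; by rewrite hCl geB.
have cardeq : forall j, #|Chat j| = lam.
  move=> j; rewrite -(hCl j); symmetry; apply: (@sum_eq_le _ (fun j => #|C j|) (fun j => #|Chat j|)) => [i|].
    by rewrite hCl geB.
  by rewrite -!sum_mult; apply: leq_sum => e _; rewrite multeq.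
exists Chat; split => //; split.
  move=> j; split; first exact: cutB.
  by move=> Y hY; rewrite cardeq -(hCl (Ordinal hk)); exact: (proj2 (hC _) _ hY).
move=> i j lij p hp; split.
  exact: (cutB i).
move: hp; rewrite /is_st_path => /and3P[ch _ _].
apply: (find_mono _ (sB i) ch).
apply/subsetP => v; rewrite !in_set => h; apply: leq_trans h.
apply: leq_sub2l; exact: ltnW.
Qed.
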